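(* Let $\mathbb{S}^1$ be a circle of perimeter $1$, let $P\subset\mathbb{S}^1$ be a finite point set containing a source $s$ with $|P|>2$, and let $\rho_{\mathrm{opt}}$ be an optimal range assignment for $P$ (for a fixed $\alpha>1$). Then $\rho_{\mathrm{opt}}(p)<\frac12$ for all $p\in P$.
   Context: Distance on $\mathbb{S}^1$ is arc length along the circle: $d(p,q)=\min(d_{\mathrm{cw}}(p,q),d_{\mathrm{ccw}}(p,q))$. A range assignment $\rho$ on $P$ induces a directed graph with edge $(p,q)$ iff $d(p,q)\le\rho(p)$; it is feasible if the graph contains an arborescence rooted at $s$ spanning $P$; its cost is $\sum_{p\in P}\rho(p)^\alpha$ with $\alpha>1$; an optimal assignment is a feasible one of minimum cost. *)

(* Defs.v *)
From mathcomp Require Import all_boot all_order all_algebra.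
From mathcomp Require Import all_classical all_reals all_analysis.
Set Implicit Arguments. Unset Strict Implicit. Unset Printing Implicit Defensive.
Import Order.TTheory GRing.Theory Num.Theory.
Local Open Scope ring_scope.

Section Circle.
Variable R : realType.

(* Points of the circle S^1 of perimeter 1 are coordinates in [0,1). *)
Definition on_circle (x : R) : Prop := 0 <= x /\ x < 1.

(* Arc-length distance: min of clockwise and counter-clockwise arcs. *)
Definition cdist (p q : R) : R := Num.min `|p - q| (1 - `|p - q|).

Definition edge (rho : R -> R) (p q : R) : Prop := cdist p q <= rho p.

(* An arborescence rooted at s spanning P in the graph induced by rho:
   a parent map par such that every non-root point of P has its parent in P,
   joined by an edge (par p, p), and following parents from any point of P
   reaches s (so there are no cycles). *)
Definition arborescence (P : seq R) (s : R) (rho : R -> R) (par : R -> R) : Prop :=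
  (forall p, p \in P -> p != s -> par p \in P /\ edge rho (par p) p) /\
  (forall p, p \in P -> exists n : nat, iter n par p = s).

Definition range_assignment (P : seq R) (rho : R -> R) : Prop :=
  forall p, p \in P -> 0 <= rho p.

Definition feasible (P : seq R) (s : R) (rho : R -> R) : Prop :=
  range_assignment P rho /\ exists par, arborescence P s rho par.

Definition cost (alpha : R) (P : seq R) (rho : R -> R) : R :=
  \sum_(p <- P) powR (rho p) alpha.

Definition optimal (alpha : R) (P : seq R) (s : R) (rho : R -> R) : Prop :=
  feasible P s rho /\
  forall rho', feasible P s rho' -> cost alpha P rho <= cost alpha P rho'.

End Circle.

(* Main.v *)
Require Import Defs.
From mathcomp Require Import all_boot all_order all_algebra.
From mathcomp Require Import all_classical all_reals all_analysis.
From mathcomp Require Import ring lra.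
Import Order.TTheory GRing.Theory Num.Theory.
Local Open Scope ring_scope.

Section G.
Context {R : realType}.
Implicit Types p q r x : R.

Lemma normE' (x : R) : (0 <= x /\ `|x| = x) \/ (x < 0 /\ `|x| = - x).
Proof. case: (lerP 0 x) => h; [left; rewrite ger0_norm | right; rewrite ltr0_norm] =>//; split=> //; exact: ltW. Qed.

Lemma minE' (a b : R) : (a <= b /\ Num.min a b = a) \/ (b < a /\ Num.min a b = b).
Proof. by case: (lerP a b) => h; [left | right]. Qed.

Ltac kill := rewrite /cdist /on_circle;
  repeat match goal with
  | |- context[`|?x|] => have [[? ->]|[? ->]] := normE' x
  | |- context[Num.min ?a ?b] => have [[? ->]|[? ->]] := minE' a b
  end; lra.

Lemma cd_ge0 p q : on_circle p -> on_circle q -> 0 <= cdist p q.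
Proof. move: p q => p q; kill. Qed.

Lemma cd_le p q : cdist p q <= 1/2.
Proof. kill. Qed.

Lemma cd_sym p q : cdist p q = cdist q p.
Proof. by rewrite /cdist distrC. Qed.

Lemma cd_pp p : cdist p p = 0.
Proof. kill. Qed.

Lemma cd_pos p q : on_circle p -> on_circle q -> p != q -> 0 < cdist p q.
Proof. move=> + + /lt_total/orP[]; kill. Qed.

Lemma cd_anti p q r : on_circle p -> on_circle q -> on_circle r ->
  cdist p q = 1/2 -> cdist p r + cdist r q = 1/2.
Proof. kill. Qed.
End G.
Section C.
Context {R : realType}.

Lemma reach_same (f g : R -> R) s n x :
  (forall i, (i < n)%N -> g (iter i f x) = f (iter i f x)) ->
  iter n f x = s -> exists m, iter m g x = s.
Proof.
elim: n x => [|n IH] x H hx; first by exists 0%N.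
rewrite iterSr in hx.
have [m hm] : exists m, iter m g (f x) = s.
  apply: IH hx => i hi; rewrite -iterSr; apply: H.
  by [].
exists m.+1; rewrite iterSr -hm; congr iter.
by have := H 0%N isT.
Qed.

Lemma reach_exc (f g : R -> R) s :
  (forall y, g y != f y -> exists m, iter m g y = s) ->
  forall n x, iter n f x = s -> exists m, iter m g x = s.
Proof.
move=> H; elim=> [|n IH] x hx; first by exists 0%N.
case: (eqVneq (g x) (f x)) => e; last exact: H.
rewrite iterSr in hx; have [m hm] := IH _ hx.
by exists m.+1; rewrite iterSr e.
Qed.

Lemma reach_step (g : R -> R) s y z : g y = z ->
  (exists m, iter m g z = s) -> exists m, iter m g y = s.
Proof. by move=> e [m hm]; exists m.+1; rewrite iterSr e. Qed.

Lemma avoid (f : R -> R) s y z n : iter n f z = s ->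
  (forall m, iter m f y = s -> (n < m)%N) ->
  forall i, (i <= n)%N -> iter i f z != y.
Proof.
move=> hz hy i hi; apply/eqP => e.
have : iter (n - i) f y = s by rewrite -e -iterD subnK.
by move/hy; rewrite ltnNge leq_subr.
Qed.

Lemma mindepth (f : R -> R) s x : (exists n, iter n f x = s) ->
  exists d, iter d f x = s /\ forall m, iter m f x = s -> (d <= m)%N.
Proof.
case=> n hn; have ex : exists n, iter n f x == s by exists n; apply/eqP.
case: (ex_minnP ex) => d /eqP hd hmin; exists d; split=> // m /eqP; exact: hmin.
Qed.

Lemma argmax (T : eqType) (f : T -> R) (s : seq T) x0 : x0 \in s ->
  exists2 x, x \in s & forall y, y \in s -> f y <= f x.
Proof.
elim: s x0 => [//|a s IH] x0 _.
case: (boolP (x0 \in s)) => [/IH [x xs hx]|_].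
  case: (lerP (f a) (f x)) => h.
    exists x; first by rewrite inE xs orbT.
    by move=> y; rewrite inE => /orP[/eqP ->//|]; exact: hx.
  exists a; first by rewrite inE eqxx.
  move=> y; rewrite inE => /orP[/eqP ->//|ys].
  exact: le_trans (hx _ ys) (ltW h).
case: s IH => [|b s] IH.
  by exists a; rewrite ?inE // => y; rewrite inE => /eqP ->.
have [x xs hx] := IH b (mem_head _ _).
case: (lerP (f a) (f x)) => h.
  exists x; first by rewrite inE xs orbT.
  by move=> y; rewrite inE => /orP[/eqP ->//|]; exact: hx.
exists a; first by rewrite inE eqxx.
move=> y; rewrite inE => /orP[/eqP ->//|ys].
exact: le_trans (hx _ ys) (ltW h).
Qed.

Lemma sum_lt1 (s : seq R) (f g : R -> R) j : uniq s -> j \in s ->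
  (forall x, x \in s -> f x <= g x) -> f j < g j ->
  \sum_(x <- s) f x < \sum_(x <- s) g x.
Proof.
move=> us js H hj; rewrite (bigD1_seq j) // [X in _ < X](bigD1_seq j) //=.
apply: ltr_leD => //.
rewrite big_seq_cond [X in _ <= X]big_seq_cond; apply: ler_sum => x /andP[xs _].
exact: H.
Qed.

Lemma sum_lt2 (s : seq R) (f g : R -> R) j k : uniq s -> j \in s -> k \in s -> j != k ->
  (forall x, x \in s -> x != j -> x != k -> f x <= g x) -> f j + f k < g j + g k ->
  \sum_(x <- s) f x < \sum_(x <- s) g x.
Proof.
move=> us js ks jk H hj; rewrite (bigD1_seq j) // [X in _ < X](bigD1_seq j) //=.
rewrite -[\sum_(x <- s | x != j) f x]big_filter -[\sum_(x <- s | x != j) g x]big_filter.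
have ks' : k \in [seq x <- s | x != j] by rewrite mem_filter eq_sym jk.
have us' : uniq [seq x <- s | x != j] by rewrite filter_uniq.
rewrite (bigD1_seq k) // [X in _ < _ + X](bigD1_seq k) //= !addrA.
apply: ltr_leD => //.
rewrite big_seq_cond [X in _ <= X]big_seq_cond; apply: ler_sum => x /andP[].
rewrite mem_filter => /andP[xj xs] xk; exact: H.
Qed.

Lemma superadd (al a b : R) : 1 < al -> 0 < a -> 0 < b ->
  a `^ al + b `^ al < (a + b) `^ al.
Proof.
move=> hal ha hb.
have e : forall x : R, 0 < x -> x `^ al = x * x `^ (al - 1).
  move=> x hx; have -> : x `^ al = x `^ (1 + (al - 1)) by rewrite addrC subrK.
  rewrite (@powRD _ x 1 (al - 1)) ?powRr1 ?(ltW hx) //.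
  by rewrite (gt_eqF hx) implybT.
have hab : 0 < a + b by lra.
rewrite (e a ha) (e b hb) (e _ hab) mulrDl.
have h1 : 0 < al - 1 by lra.
have lt1 : a `^ (al - 1) < (a + b) `^ (al - 1).
  apply: gt0_ltr_powR => //; rewrite ?nnegrE; lra.
have lt2 : b `^ (al - 1) < (a + b) `^ (al - 1).
  apply: gt0_ltr_powR => //; rewrite ?nnegrE; lra.
by apply: ltrD; rewrite ltr_pM2l.
Qed.
End C.
Arguments mindepth {R f s x}.
Arguments avoid {R f s y z n}.
Arguments reach_same {R f g s n x}.
Arguments reach_exc {R f g s}.
Arguments reach_step {R g s y z}.
Arguments superadd {R al a b}.
Theorem lemma13 (R : realType) (alpha : R) (P : seq R) (s : R) (rho : R -> R) :
  1 < alpha ->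
  uniq P -> (forall p, p \in P -> on_circle p) ->
  s \in P -> (2 < size P)%N ->
  optimal alpha P s rho ->
  forall p, p \in P -> rho p < 1 / 2.
Proof.
move=> Ha Pu Pc sP sz [[Rg [par [Hpar Hreach]]] Opt] p pP.
rewrite ltNge; apply/negP => Hp.
have pc := Pc p pP.
have rp0 : 0 < rho p by lra.
have al0 : 0 < alpha by lra.
have powlt : forall x y : R, 0 <= x -> x < y -> x `^ alpha < y `^ alpha.
  by move=> x y hx hy; apply: gt0_ltr_powR => //; rewrite nnegrE //; lra.
have [[q qP hq]|noq] := pselect (exists2 q, q \in P & cdist p q = 1/2).
-
  have qc := Pc q qP.
  have pq : p != q by apply/eqP => e; move: hq; rewrite -e cd_pp; lra.
  have [x0 x0P] : exists x0, x0 \in [seq x <- P | (x != p) && (x != q)].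
    case: (pselect (exists x0, x0 \in [seq x <- P | (x != p) && (x != q)])) => // H0.
    have H : forall x, ~ (x \in [seq x <- P | (x != p) && (x != q)]) by move=> x hx; apply: H0; exists x.
    have : (size P <= size [:: p; q])%N.
      apply: uniq_leq_size => // x xP; rewrite !inE.
      case: (eqVneq x p) => //= xp; case: (eqVneq x q) => //= xq.
      by exfalso; apply: (H x); rewrite mem_filter xp xq.
    by rewrite /= leqNgt sz.
  have [r0 + hr0] := @argmax R _ (cdist p) _ _ x0P.
  rewrite mem_filter => /andP[/andP[r0p r0q] r0P].
  have rc := Pc r0 r0P.
  set a := cdist p r0; set b := cdist r0 q.
  have hab : a + b = 1/2 by apply: cd_anti.
  have a0 : 0 < a by apply: cd_pos; rewrite // eq_sym.
  have b0 : 0 < b by apply: cd_pos.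
  have bnd : forall x, x \in P -> x != q -> cdist p x <= a.
    move=> x xP xq; case: (eqVneq x p) => [->|xp]; first by rewrite cd_pp; lra.
    by apply: hr0; rewrite mem_filter xp xq.
  pose rho' := fun x => if x == p then a else if x == r0 then Num.max (rho r0) b else rho x.
  have rr : forall y, y != p -> rho y <= rho' y.
    move=> y yp; rewrite /rho' (negbTE yp); case: ifP => [/eqP ->|_] //.
    by rewrite le_max lexx.
  have rp' : rho' p = a by rewrite /rho' eqxx.
  have rr0 : rho' r0 = Num.max (rho r0) b by rewrite /rho' (negbTE r0p) eqxx.
  have Rg' : range_assignment P rho'.
    move=> x xP; case: (eqVneq x p) => [->|xp]; first by rewrite rp'; lra.
    exact: le_trans (Rg x xP) (rr x xp).
  have costlt : cost alpha P rho' < cost alpha P rho.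
    rewrite /cost; apply: (@sum_lt2 R P _ _ p r0) => //; first by rewrite eq_sym.
      by move=> x _ xp xr; rewrite /rho' (negbTE xp) (negbTE xr).
    rewrite rp' rr0.
    case: (lerP b (rho r0)) => hb.
      apply: ltr_leD => //; apply: powlt; lra.
    have := superadd (al:=alpha) Ha a0 b0; rewrite hab => h.
    have h2 : (1/2) `^ alpha <= rho p `^ alpha.
      by apply: ge0_ler_powR; rewrite ?nnegrE //; lra.
    have := powR_ge0 (rho r0) alpha; lra.
  have edge_old : forall x, x \in P -> x != s -> x != q ->
      cdist (par x) x <= rho' (par x).
    move=> x xP xs xq; have [_ ed] := Hpar x xP xs.
    case: (eqVneq (par x) p) => [->|pxp]; first by rewrite rp'; exact: bnd.
    exact: le_trans ed (rr _ pxp).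
  have feas : forall par', arborescence P s rho' par' -> False.
    move=> par' Ar.
    have := Opt rho' (conj Rg' (ex_intro _ par' Ar)); rewrite leNgt costlt //.
  case: (boolP ((q != s) && (par q == p))) => [/andP[qs /eqP pqp]|hqs].
  + have [dq [hdq mdq]] := mindepth (Hreach q qP).
    have [dr [hdr mdr]] := mindepth (Hreach r0 r0P).
    have [dp [hdp mdp]] := mindepth (Hreach p pP).
    have dpq : (dp < dq)%N.
      move: hdq mdq; case: dq => [/= e|k]; first by rewrite e eqxx in qs.
      by rewrite iterSr pqp => e _; rewrite ltnS; apply: mdp.
    case: (ltnP dr dq) => hrq.
    * apply: (feas (fun x => if x == q then r0 else par x)); split.
        move=> x xP xs; case: (eqVneq x q) => [->|xq].
          by split => //; rewrite /edge rr0 le_max lexx orbT.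
        by have [? _] := Hpar x xP xs; split => //; exact: edge_old.
      move=> x xP; have [n hn] := Hreach x xP.
      apply: (reach_exc (f:=par)) hn => y; case: (eqVneq y q) => [->|yq]; last by rewrite eqxx.
      move=> _; apply: (reach_step (z:=r0)); first by rewrite eqxx.
      move: (hdr) => hdr'; apply: (reach_same (n:=dr)) hdr' => i hi.
      have := avoid (y:=q) hdr (fun m hm => leq_trans hrq (mdq m hm)) i (ltnW hi).
      by move=> /negbTE ->.
    * apply: (feas (fun x => if x == q then r0 else if x == r0 then p else par x)); split.
        move=> x xP xs; case: (eqVneq x q) => [->|xq].
          by split => //; rewrite /edge rr0 le_max lexx orbT.
        case: (eqVneq x r0) => [->|xr].
          by split => //; rewrite /edge rp'.
        by have [? _] := Hpar x xP xs; split => //; exact: edge_old.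
      have pG : exists m, iter m (fun x => if x == q then r0 else if x == r0 then p else par x) p = s.
        move: (hdp) => hdp'; apply: (reach_same (n:=dp)) hdp' => i hi.
        have := avoid (y:=q) hdp (fun m hm => leq_trans dpq (mdq m hm)) i (ltnW hi).
        move=> /negbTE ->.
        have := avoid (y:=r0) hdp (fun m hm => leq_trans dpq (leq_trans hrq (mdr m hm))) i (ltnW hi).
        by move=> /negbTE ->.
      have rG : exists m, iter m (fun x => if x == q then r0 else if x == r0 then p else par x) r0 = s.
        by apply: (reach_step (z:=p)) pG; rewrite ?(negbTE r0q) ?eqxx.
      move=> x xP; have [n hn] := Hreach x xP.
      apply: (reach_exc (f:=par)) hn => y.
      case: (eqVneq y q) => [-> _|yq].
        by apply: (reach_step (z:=r0)) rG; rewrite eqxx.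
      case: (eqVneq y r0) => [-> _ //|yr].
      by rewrite eqxx.
  + apply: (feas par); split => // x xP xs.
    have [? ed] := Hpar x xP xs; split => //.
    case: (eqVneq x q) => [exq|xq]; last exact: edge_old.
    move: hqs; rewrite -exq xs /=; case: (eqVneq (par x) p) => // pxp _.
    exact: le_trans ed (rr _ pxp).
-
  have [r rP hr] := @argmax R _ (cdist p) _ _ pP.
  set m := cdist p r.
  have m0 : 0 <= m by apply: cd_ge0; auto.
  have mlt : m < 1/2.
    rewrite lt_neqAle cd_le andbT; apply/eqP => e; apply: noq; by exists r.
  pose rho' := fun x => if x == p then m else rho x.
  have Rg' : range_assignment P rho'.
    by move=> x xP; rewrite /rho'; case: ifP => _ //; exact: Rg.
  have costlt : cost alpha P rho' < cost alpha P rho.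
    rewrite /cost; apply: (@sum_lt1 R P _ _ p) => //.
      move=> x _; rewrite /rho'; case: ifP => [/eqP ->|_] //.
      by apply: ge0_ler_powR; rewrite ?nnegrE //; lra.
    by rewrite /rho' eqxx; apply: powlt; lra.
  suff : feasible P s rho' by move=> /Opt; rewrite leNgt costlt.
  split => //; exists par; split => // x xP xs; have [? ed] := Hpar x xP xs; split => //.
  rewrite /edge /rho'; case: ifP => [/eqP ->|_] //.
  exact: hr.
Qed.
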